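(* Let $V = V_1 \oplus V_2$ be a finite-dimensional complex vector space, $T = \mathrm{Sym}(V^* )$, $T_i = \mathrm{Sym}(V_i^* ) \subset T$. Let $d \ge 2$, $F_i \in S^d V_i$ for $i=1,2$, and $F = F_1 + F_2 \in S^d V$. Let $l_i \in V_i^*$ with $l_i \notin F_i^\perp$ (the perp ideal of $F_i$ in $T_i$) for $i = 1,2$. Then <ol> <li>$F^\perp + (l_1 + l_2) \subsetneq \big[F_1^\perp + (l_1) + (V_2^* )\big] \cap \big[F_2^\perp + (l_2) + (V_1^* )\big]$ as ideals of $T$;</li> <li>$\dim_{\mathbb{C}} T/(F^\perp + (l_1+l_2)) \ge \dim_{\mathbb{C}} T_1/(F_1^\perp + (l_1)) + \dim_{\mathbb{C}} T_2/(F_2^\perp + (l_2))$.</li> </ol>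
   Context: For a complex vector space $W$, $\mathrm{Sym}(W^* )$ acts on $\mathrm{Sym}(W)$ by differentiation. For $G \in S^d W$, the perp ideal is $G^\perp = \{ g \in \mathrm{Sym}(W^* ) : g \cdot G = 0 \}$. $F^\perp$ denotes the perp ideal of $F$ in $T$; $(V_j^* )$ denotes the ideal of $T$ generated by $V_j^*$, and ideals of $T_i$ are regarded in $T$ via $T_i \subset T$ (generating ideals there). *)

(* Defs.v *)
From HB Require Import structures.
From mathcomp Require Import all_boot all_order all_algebra.
From mathcomp Require Import reals.
From mathcomp Require Import complex.
From mathcomp Require Import mpoly.

Set Implicit Arguments.
Unset Strict Implicit.
Unset Printing Implicit Defensive.

Import Order.TTheory GRing.Theory Num.Theory.
Local Open Scope ring_scope.

(* Coordinates: V = K^(n1+n2), V1 = first n1 coordinates, V2 = last n2.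
   Both Sym(V) and T = Sym(V^* ) are modelled as {mpoly K[n1+n2]};
   T acts on Sym(V) by differentiation (apolarity). *)

Section Apolarity.
Variables (K : fieldType) (n : nat).
Local Notation P := {mpoly K[n]}.

Definition apolar (g G : P) : P :=
  \sum_(m <- msupp g) g@_m *: G^`M[m].

Definition supported_on (B : pred 'I_n) (p : P) : bool :=
  all (fun m : 'X_{1..n} => [forall i, ~~ B i ==> (m i == 0%N)]) (msupp p).

Definition ideal_in (R S : P -> Prop) : P -> Prop :=
  fun p => exists s : seq (P * P),
    (forall x, x \in s -> R x.1 /\ S x.2) /\ p = \sum_(x <- s) x.1 * x.2.

Definition ideal_add (I J : P -> Prop) : P -> Prop := fun p => I p \/ J p.

Definition perp_in (R : P -> Prop) (G : P) : P -> Prop :=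
  fun g => R g /\ apolar g G = 0.

(* linear forms in the variables indexed by B, i.e. elements of V_B^* *)
Definition lin_forms_on (B : pred 'I_n) : P -> Prop :=
  fun p => p \is 1.-homog /\ supported_on B p.

(* dim_K (R / I) >= k : there are k elements of R linearly independent modulo I *)
Definition codim_ge (R I : P -> Prop) (k : nat) : Prop :=
  exists s : seq P, size s = k /\ (forall x, x \in s -> R x) /\
    forall c : seq K, size c = k ->
      I (\sum_(j < k) c`_j *: s`_j) -> forall j, c`_j = 0.

End Apolarity.

Definition blk1 (n1 n2 : nat) : pred 'I_(n1 + n2) := fun i => (i < n1)%N.
Definition blk2 (n1 n2 : nat) : pred 'I_(n1 + n2) := fun i => (n1 <= i)%N.
Arguments blk1 : clear implicits.
Arguments blk2 : clear implicits.

(* Main.v *)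
Require Import Defs.
From HB Require Import structures.
From mathcomp Require Import all_boot all_order all_algebra.
From mathcomp Require Import reals complex mpoly.
From mathcomp Require Import zify.
Import GRing.Theory Num.Theory.
Local Open Scope ring_scope.

Set Implicit Arguments. Unset Strict Implicit. Unset Printing Implicit Defensive.

Section Ap.
Variables (K : numFieldType) (n : nat).
Local Notation P := {mpoly K[n]}.
Implicit Types (g h G H : P).

Lemma apolar_sub g G (s : seq 'X_{1..n}) : uniq s -> {subset msupp g <= s} ->
  apolar g G = \sum_(m <- s) g@_m *: G^`M[m].
Proof.
move=> us sub; rewrite [RHS](bigID (fun m => m \in msupp g)) /=.
rewrite [X in _ = _ + X]big1 ?addr0; last first.
  by move=> m /memN_msupp_eq0 ->; rewrite scale0r.
rewrite -[X in _ = X]big_filter /apolar; apply/perm_big/uniq_perm.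
- by rewrite ?filter_uniq ?msupp_uniq.
- by rewrite ?filter_uniq ?msupp_uniq.
move=> m; rewrite mem_filter; case: (boolP (m \in msupp g)) => mi //=.
by rewrite (sub _ mi).
Qed.

Lemma apolarD g h G : apolar (g + h) G = apolar g G + apolar h G.
Proof.
set s := undup (msupp g ++ msupp h ++ msupp (g + h)).
have us : uniq s by apply: undup_uniq.
rewrite !(@apolar_sub _ _ s) //; try by move=> m mi; rewrite mem_undup !mem_cat mi ?orbT.
by rewrite -big_split; apply: eq_bigr => m _; rewrite mcoeffD scalerDl.
Qed.

Lemma apolarZ c g G : apolar (c *: g) G = c *: apolar g G.
Proof.
rewrite (@apolar_sub _ _ (msupp g)) ?msupp_uniq //; last exact: msuppZ_le.
rewrite /apolar scaler_sumr; apply: eq_bigr => m _; by rewrite mcoeffZ scalerA.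
Qed.

Lemma apolar0 G : apolar 0 G = 0.
Proof. by rewrite /apolar msupp0 big_nil. Qed.

Lemma apolarN g G : apolar (- g) G = - apolar g G.
Proof. by rewrite -scaleN1r apolarZ scaleN1r. Qed.

Lemma apolarB g h G : apolar (g - h) G = apolar g G - apolar h G.
Proof. by rewrite apolarD apolarN. Qed.

Lemma apolar_sum (I : Type) (r : seq I) (F : I -> P) G :
  apolar (\sum_(i <- r) F i) G = \sum_(i <- r) apolar (F i) G.
Proof.
elim: r => [|x r ih]; first by rewrite !big_nil apolar0.
by rewrite !big_cons apolarD ih.
Qed.

Lemma apolarX m G : apolar 'X_[m] G = G^`M[m].
Proof. by rewrite /apolar msuppX big_seq1 mcoeffX eqxx scale1r. Qed.

Lemma apolar1 G : apolar 1 G = G.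
Proof. by rewrite -mpolyX0 apolarX mderivm0m. Qed.

Lemma apolarGD g G H : apolar g (G + H) = apolar g G + apolar g H.
Proof. by rewrite /apolar -big_split; apply: eq_bigr => m _; rewrite mderivmD scalerDr. Qed.

Lemma apolarGZ c g G : apolar g (c *: G) = c *: apolar g G.
Proof.
rewrite /apolar scaler_sumr; apply: eq_bigr => m _.
by rewrite mderivmZ !scalerA mulrC.
Qed.

Lemma apolarG0 g : apolar g 0 = 0.
Proof. by rewrite /apolar big1 // => m _; rewrite raddf0 scaler0. Qed.

Lemma apolarXM m h G : apolar ('X_[m] * h) G = (apolar h G)^`M[m].
Proof.
elim/mpolyind: h => [|c m' p _ _ ih].
  by rewrite mulr0 !apolar0 raddf0.
rewrite mulrDr apolarD ih apolarD apolarZ apolarX -scalerAr -mpolyXD apolarZ apolarX.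
by rewrite mderivmD mderivmZ -mderivmDm addmC.
Qed.

Lemma apolarM g h G : apolar (g * h) G = apolar g (apolar h G).
Proof.
elim/mpolyind: g => [|c m p _ _ ih].
  by rewrite mul0r !apolar0.
by rewrite mulrDl apolarD ih -scalerAl apolarZ apolarXM apolarD apolarZ apolarX.
Qed.

End Ap.

Section Sup.
Variables (K : numFieldType) (n : nat).
Local Notation P := {mpoly K[n]}.
Implicit Types (g h G H p : P) (B : pred 'I_n).

Lemma supP B p : supported_on B p <->
  (forall m, p@_m != 0 -> forall i, ~~ B i -> m i = 0%N).
Proof.
split.
  move=> /allP H m nz i Bi; have := H m; rewrite mcoeff_msupp => /(_ nz).
  by move=> /forallP /(_ i); rewrite Bi /= => /eqP.
move=> H; apply/allP => m; rewrite mcoeff_msupp => nz; apply/forallP => i.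
by apply/implyP => Bi; rewrite (H m nz i Bi).
Qed.

Lemma apolar_coef g G k : (apolar g G)@_k =
  \sum_(m <- msupp g) g@_m * (G@_(m + k) *+ (\prod_(i < n) ((m + k)%MM i)^_(m i))).
Proof.
rewrite /apolar raddf_sum /=; apply: eq_bigr => m _.
by rewrite mcoeffZ mcoeff_mderivm.
Qed.

Lemma apolar_kill B g G :
  (forall m, m \in msupp g -> exists2 i, ~~ B i & (0 < m i)%N) ->
  supported_on B G -> apolar g G = 0.
Proof.
move=> Hg /supP HG; apply/mpolyP => k; rewrite apolar_coef mcoeff0 big_seq big1 //.
move=> m /Hg [i Bi mi]; case: (eqVneq (G@_(m + k)) 0) => [->|nz].
  by rewrite mul0rn mulr0.
have := HG _ nz i Bi; rewrite mnmDE => /eqP; rewrite addn_eq0 => /andP [/eqP mi0 _].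
by rewrite mi0 in mi.
Qed.

Lemma apolar_supp B g G : supported_on B G -> supported_on B (apolar g G).
Proof.
move=> /supP HG; apply/supP => k nz i Bi; apply/eqP/negP => /negP ki.
move: nz; rewrite apolar_coef big1 ?eqxx // => m _.
case: (eqVneq (G@_(m + k)) 0) => [->|nz]; first by rewrite mul0rn mulr0.
by have := HG _ nz i Bi; rewrite mnmDE => /eqP; rewrite addn_eq0 (negbTE ki) andbF.
Qed.

Lemma supp_const B B' p : supported_on B p -> supported_on B' p ->
  (forall i, ~~ B i || ~~ B' i) -> p = (p@_0)%:MP.
Proof.
move=> /supP H1 /supP H2 HB; apply/mpolyP => k; rewrite mcoeffC.
case: (eqVneq k 0%MM) => [->|nk]; first by rewrite mulr1.
rewrite mulr0; apply/eqP/negP => /negP nz; move/eqP: nk; apply; apply/mnmP => i.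
rewrite mnm0E; case/orP: (HB i) => Bi; [exact: (H1 _ nz) | exact: (H2 _ nz)].
Qed.


Lemma homogP' d p : p \is d.-homog <-> (forall m, p@_m != 0 -> mdeg m = d).
Proof.
split.
  by move=> /dhomogP H m nz; apply: H; rewrite mcoeff_msupp.
by move=> H; apply/dhomogP => m; rewrite mcoeff_msupp; apply: H.
Qed.

Lemma apolar_homog e k g G : g \is e.-homog -> G \is k.-homog -> (e <= k)%N ->
  apolar g G \is (k - e)%N.-homog.
Proof.
move=> /homogP' Hg /homogP' HG lek; apply/homogP' => k' nz.
apply/eqP/negP => /negP ne; move: nz; rewrite apolar_coef big_seq big1 ?eqxx //.
move=> m; rewrite mcoeff_msupp => /Hg me.
case: (eqVneq (G@_(m + k')) 0) => [->|nz]; first by rewrite mul0rn mulr0.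
have := HG _ nz; rewrite mdegD me => E; move: ne; rewrite -E addKn eqxx //.
Qed.

Lemma homog0_const p : p \is 0.-homog -> p = (p@_0)%:MP.
Proof.
move=> /homogP' H; apply/mpolyP => k; rewrite mcoeffC.
case: (eqVneq k 0%MM) => [->|nk]; first by rewrite mulr1.
rewrite mulr0; apply/eqP/negP => /negP nz; move/eqP: nk; apply.
by apply/eqP; rewrite -mdeg_eq0; apply/eqP/H.
Qed.

Lemma homog_coef0 e p : p \is e.-homog -> (0 < e)%N -> p@_0 = 0.
Proof.
move=> /homogP' H e0; apply/eqP/negP => /negP /H; rewrite mdeg0 => E.
by move: e0; rewrite -E.
Qed.

Lemma supp_noconst B p : supported_on B p -> p@_0 = 0 ->
  forall m, p@_m != 0 -> exists2 i, B i & (0 < m i)%N.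
Proof.
move=> /supP H p0 m nz.
have : m != 0%MM by apply/negP => /eqP E; move: nz; rewrite E p0 eqxx.
move=> /negP nm; case: (pickP (fun i => 0 < m i)%N) => [i mi|none].
  exists i => //; apply/negPn/negP => Bi; by rewrite (H m nz i Bi) in mi.
by exfalso; apply: nm; apply/eqP/mnmP => i; rewrite mnm0E; move: (none i); case: (m i).
Qed.

Lemma coef_sumX (s : seq 'X_{1..n}) (f : 'X_{1..n} -> K) k : uniq s ->
  (\sum_(m <- s) f m *: 'X_[m])@_k = if k \in s then f k else 0.
Proof.
move=> us; rewrite raddf_sum /=.
under eq_bigr => m _ do rewrite mcoeffZ mcoeffX.
case: ifP => ks.
  rewrite (bigD1_seq k) //= eqxx mulr1 big1 ?addr0 // => m /negbTE ->.
  by rewrite mulr0.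
rewrite big_seq big1 // => m ms; case: (eqVneq m k) => [E|]; last by rewrite mulr0.
by rewrite E ks in ms.
Qed.

Definition sm B (m : 'X_{1..n}) := [forall i, ~~ B i ==> (m i == 0%N)].

Definition proj B (p : P) : P :=
  mmap (@mpolyC n K) (fun i => if B i then 'X_i else 0) p.

Lemma mmap1_proj B m :
  mmap1 (fun i => if B i then ('X_i : P) else 0) m = if sm B m then 'X_[m] else 0.
Proof.
rewrite /mmap1 mpolyXE_id; case: ifP => smm.
  apply: eq_bigr => i _; case: ifP => // Bi.
  by move/forallP: smm => /(_ i); rewrite Bi /= => /eqP ->; rewrite !expr0.
move/negbT: smm; rewrite negb_forall; case/existsP => i; rewrite negb_imply => /andP [Bi mi].
by rewrite (bigD1 i) //= (negbTE Bi) expr0n (negbTE mi) mul0r.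
Qed.

Lemma projE B p : proj B p = \sum_(m <- msupp p) (if sm B m then p@_m else 0) *: 'X_[m].
Proof.
rewrite /proj /mmap; apply: eq_bigr => m _; rewrite mmap1_proj mul_mpolyC.
by case: ifP; rewrite ?scaler0 ?scale0r.
Qed.

Lemma proj_coef B p k : (proj B p)@_k = if sm B k then p@_k else 0.
Proof.
rewrite projE coef_sumX ?msupp_uniq //; case: ifP => //.
by move/negbT => /memN_msupp_eq0 ->; case: ifP.
Qed.

Lemma projD B p q : proj B (p + q) = proj B p + proj B q.
Proof. by apply/mpolyP => k; rewrite mcoeffD !proj_coef mcoeffD; case: ifP; rewrite ?addr0. Qed.

Lemma projZ B c p : proj B (c *: p) = c *: proj B p.
Proof. by apply/mpolyP => k; rewrite mcoeffZ !proj_coef mcoeffZ; case: ifP; rewrite ?mulr0. Qed.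

Lemma projN B p : proj B (- p) = - proj B p.
Proof. by rewrite -scaleN1r projZ scaleN1r. Qed.

Lemma projB B p q : proj B (p - q) = proj B p - proj B q.
Proof. by rewrite projD projN. Qed.

Lemma projM B p q : proj B (p * q) = proj B p * proj B q.
Proof. by rewrite /proj; case: (mmap_is_multiplicative (fun i => if B i then ('X_i : P) else 0) (@mpolyC n K)) => ->. Qed.

Lemma proj_supp B p : supported_on B (proj B p).
Proof.
apply/supP => k; rewrite proj_coef; case: ifP => [smk _ i Bi|]; last by rewrite eqxx.
by move/forallP: smk => /(_ i); rewrite Bi /= => /eqP.
Qed.

Lemma proj_id B p : supported_on B p -> proj B p = p.
Proof.
move=> /supP H; apply/mpolyP => k; rewrite proj_coef; case: ifP => // /negbT.
case: (eqVneq (p@_k) 0) => // nz; rewrite negb_forall; case/existsP => i.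
by rewrite negb_imply => /andP [Bi]; rewrite (H _ nz i Bi).
Qed.

Lemma proj_rest B p m : (p - proj B p)@_m != 0 -> exists2 i, ~~ B i & (0 < m i)%N.
Proof.
rewrite mcoeffB proj_coef; case: ifP => [_|]; first by rewrite subrr eqxx.
move/negbT; rewrite negb_forall; case/existsP => i; rewrite negb_imply => /andP [Bi mi] _.
by exists i; rewrite // lt0n.
Qed.

Lemma proj_kill B p : (forall m, p@_m != 0 -> exists2 i, ~~ B i & (0 < m i)%N) ->
  proj B p = 0.
Proof.
move=> H; apply/mpolyP => k; rewrite proj_coef mcoeff0; case: ifP => // smk.
apply/eqP/negP => /negP /H [i Bi ki]; move/forallP: smk => /(_ i).
by rewrite Bi /= => /eqP E; rewrite E in ki.
Qed.

Lemma supp0 B : supported_on B (0 : P).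
Proof. by apply/supP => m; rewrite mcoeff0 eqxx. Qed.

Lemma suppN B p : supported_on B p -> supported_on B (- p).
Proof. by move=> /supP H; apply/supP => m; rewrite mcoeffN oppr_eq0; apply: H. Qed.

End Sup.

Section Idl.
Variables (K : numFieldType) (n : nat).
Local Notation P := {mpoly K[n]}.
Implicit Types (R S : P -> Prop) (p q : P).

Lemma idl0 R S : ideal_in R S 0.
Proof. by exists [::]; split => //; rewrite big_nil. Qed.

Lemma idlD R S p q : ideal_in R S p -> ideal_in R S q -> ideal_in R S (p + q).
Proof.
move=> [s1 [H1 ->]] [s2 [H2 ->]]; exists (s1 ++ s2); split; last by rewrite big_cat.
by move=> x; rewrite mem_cat => /orP [/H1|/H2].
Qed.

Lemma idlM R S y p : (forall x, R x) -> ideal_in R S p -> ideal_in R S (y * p).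
Proof.
move=> RT [s [H ->]]; exists [seq (y * x.1, x.2) | x <- s]; split.
  by move=> x /mapP [z /H [_ ?] ->]; split.
by rewrite big_map mulr_sumr; apply: eq_bigr => x _; rewrite mulrA.
Qed.

Lemma idlG R S x : R 1 -> S x -> ideal_in R S x.
Proof.
move=> R1 Sx; exists [:: (1, x)]; split; last by rewrite big_seq1 mul1r.
by move=> z; rewrite inE => /eqP ->.
Qed.

Lemma idl_mono R S S' p : (forall x, S x -> S' x) -> ideal_in R S p -> ideal_in R S' p.
Proof.
move=> HS [s [H ->]]; exists s; split => // x /H [? ?]; split => //; exact: HS.
Qed.

Lemma idl_sum R S (I : eqType) (r : seq I) (F : I -> P) :
  (forall i, i \in r -> ideal_in R S (F i)) -> ideal_in R S (\sum_(i <- r) F i).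
Proof.
elim: r => [|x r ih] H; first by rewrite big_nil; apply: idl0.
rewrite big_cons; apply: idlD; first by apply: H; rewrite inE eqxx.
by apply: ih => i ir; apply: H; rewrite inE ir orbT.
Qed.

Lemma idlN R S p : (forall x, R x) -> ideal_in R S p -> ideal_in R S (- p).
Proof. by move=> RT H; rewrite -mulN1r; apply: idlM. Qed.

Lemma idlB R S p q : (forall x, R x) -> ideal_in R S p -> ideal_in R S q -> ideal_in R S (p - q).
Proof. by move=> RT H1 H2; apply: idlD => //; apply: idlN. Qed.

Lemma idlZ R S c p : (forall x, R x) -> ideal_in R S p -> ideal_in R S (c *: p).
Proof. by move=> RT H; rewrite -mul_mpolyC; apply: idlM. Qed.

Lemma idl_linforms R (B' : pred 'I_n) q : (forall x, R x) ->
  (forall m, q@_m != 0 -> exists2 i, B' i & (0 < m i)%N) ->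
  ideal_in R (lin_forms_on B') q.
Proof.
move=> RT H; rewrite [q]mpolyE; apply: idl_sum => m; rewrite mcoeff_msupp => /H.
case/sig2W => i Bi mi.
have -> : 'X_[m] = 'X_[m - U_(i)] * ('X_i : P).
  by rewrite -mpolyXD submK //; apply/mnm_lepP => j; rewrite mnm1E; case: eqP => [<-|].
rewrite scalerAl; apply: idlM => //; apply: idlG => //; split.
  by rewrite dhomogX /= mdeg1.
by apply/supP => k; rewrite mcoeffX pnatr_eq0 eqb0 negbK => /eqP <- j; rewrite mnm1E;
  case: eqP => // <-; rewrite Bi.
Qed.

End Idl.

Section Supp2.
Variables (K : numFieldType) (n : nat).
Local Notation P := {mpoly K[n]}.
Lemma suppD (B : pred 'I_n) (p q : P) : supported_on B p -> supported_on B q -> supported_on B (p + q).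
Proof.
move=> /supP H1 /supP H2; apply/supP => m; rewrite mcoeffD => nz i Bi.
case: (eqVneq (p@_m) 0) => [p0|]; last by move=> /H1; apply.
by move: nz; rewrite p0 add0r => /H2; apply.
Qed.
Lemma suppZ (B : pred 'I_n) c (p : P) : supported_on B p -> supported_on B (c *: p).
Proof.
move=> /supP H; apply/supP => m; rewrite mcoeffZ mulf_eq0 negb_or => /andP [_ nz].
exact: H.
Qed.
Lemma supp_sum (B : pred 'I_n) (I : Type) (r : seq I) (F : I -> P) :
  (forall i, supported_on B (F i)) -> supported_on B (\sum_(i <- r) F i).
Proof.
move=> H; elim: r => [|x r ih]; first by rewrite big_nil; apply: supp0.
by rewrite big_cons; apply: suppD.
Qed.
End Supp2.

Section Main.
Variables (K : numFieldType) (n : nat) (B B' : pred 'I_n).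
Hypothesis HBB : forall i, B' i = ~~ B i.
Local Notation P := {mpoly K[n]}.
Variables (d : nat) (G1 G2 u u' : P).
Hypothesis hd : (2 <= d)%N.
Hypothesis hG1 : G1 \is d.-homog.
Hypothesis sG1 : supported_on B G1.
Hypothesis hG2 : G2 \is d.-homog.
Hypothesis sG2 : supported_on B' G2.
Hypothesis lu : lin_forms_on B u.
Hypothesis lu' : lin_forms_on B' u'.
Hypothesis nu : apolar u G1 != 0.

Lemma exists_h : exists h1 : P, exists c : K,
  [/\ supported_on B h1, apolar h1 G2 = 0, apolar (u * h1) G1 = c%:MP & c != 0].
Proof.
set a := apolar u G1.
have ha : a \is (d - 1)%N.-homog by apply: apolar_homog => //; [case: lu | lia].
have sa : supported_on B a by apply: apolar_supp.
have a0 : a@_0 = 0 by apply: (homog_coef0 ha); lia.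
case E: (msupp a) => [|m1 r].
  by move: nu; rewrite -/a -msupp_eq0 E.
have am1 : a@_m1 != 0 by rewrite -mcoeff_msupp E inE eqxx.
have dm1 : mdeg m1 = (d - 1)%N by move/homogP': ha; apply.
exists 'X_[m1], ((a^`M[m1])@_0); split.
- apply/supP => k; rewrite mcoeffX pnatr_eq0 eqb0 negbK => /eqP <-.
  by move/supP: sa; apply.
- apply: (apolar_kill (B := B')) => // m; rewrite msuppX inE => /eqP ->.
  have [i Bi mi] := supp_noconst sa a0 am1.
  by exists i; rewrite // HBB Bi.
- rewrite mulrC apolarM -/a apolarX; apply: homog0_const.
  have hX : ('X_[m1] : P) \is (d-1)%N.-homog by rewrite dhomogX /= dm1.
  by have := apolar_homog hX ha (leqnn _); rewrite subnn apolarX.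
rewrite mcoeff_mderivm addm0 mulrn_eq0 negb_or am1 andbT -lt0n.
by apply: prodn_gt0 => i; rewrite ffactnn fact_gt0.
Qed.


Local Notation Kg := (ideal_in (fun _ : P => True)
  (ideal_add (ideal_add (perp_in (fun p => supported_on B p) G1) (eq u)) (lin_forms_on B'))).
Local Notation Jg := (ideal_in (fun p => supported_on B p)
  (ideal_add (perp_in (fun p => supported_on B p) G1) (eq u))).

Lemma Kg_u : Kg u.
Proof. by apply: idlG => //; left; right. Qed.

Lemma Kg_noconst q : supported_on B' q -> q@_0 = 0 -> Kg q.
Proof.
move=> sq q0; apply: (idl_mono (S := lin_forms_on B')); first by move=> x; right.
exact: idl_linforms (supp_noconst sq q0).
Qed.

Lemma Kg_uu : Kg (u + u').
Proof. by apply: idlD; [apply: Kg_u | apply: idlG => //; right]. Qed.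

Lemma B_disj i : ~~ B i || ~~ B' i.
Proof. by rewrite HBB negbK orNb. Qed.

Lemma Kg_perp g : apolar g (G1 + G2) = 0 -> Kg g.
Proof.
move=> hg; set g1 := proj B g; set r := g - g1.
have rk : forall m, r@_m != 0 -> exists2 i, ~~ B i & (0 < m i)%N by apply: proj_rest.
have ar : apolar r G1 = 0.
  by apply: (apolar_kill (B := B)) => // m; rewrite mcoeff_msupp; apply: rk.
have gE : g = g1 + r by rewrite /r addrC subrK.
have e1 : apolar g1 G1 = apolar g G1 by rewrite [in RHS]gE apolarD ar addr0.
have sP1 : supported_on B (apolar g G1) by apply: apolar_supp.
have sP2 : supported_on B' (apolar g G2) by apply: apolar_supp.
have sP1' : supported_on B' (apolar g G1).
  move: hg; rewrite apolarGD => /eqP; rewrite addr_eq0 => /eqP ->; exact: suppN.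
set c := (apolar g G1)@_0.
have cE : apolar g G1 = c%:MP by apply: (supp_const sP1 sP1'); apply: B_disj.
have [h1 [c1 [sh1 _ hc1 nc1]]] := exists_h.
set k := c / c1.
set q := proj B (g - k *: (h1 * u)).
have qE : q = g1 - k *: (h1 * u).
  by rewrite /q projB projZ projM (proj_id sh1) (proj_id lu.2).
have aq : apolar q G1 = 0.
  rewrite qE apolarB apolarZ e1 cE mulrC hc1 -mul_mpolyC -rmorphM -rmorphB.
  by rewrite /k divfK // subrr rmorph0.
have -> : g = q + (k *: h1) * u + r by rewrite qE -scalerAl subrK -gE.
apply: idlD; first apply: idlD.
- by apply: idlG => //; left; left; split => //; apply: proj_supp.
- by apply: idlM => //; apply: Kg_u.
apply: (idl_mono (S := lin_forms_on B')); first by move=> x; right.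
by apply: idl_linforms => // m /rk [i Bi mi]; exists i; rewrite ?HBB.
Qed.

Lemma proj_sum (I : Type) (r : seq I) (F : I -> P) :
  proj B (\sum_(i <- r) F i) = \sum_(i <- r) proj B (F i).
Proof.
elim: r => [|x r ih]; last by rewrite !big_cons projD ih.
by rewrite !big_nil; apply: proj_kill => m; rewrite mcoeff0 eqxx.
Qed.

Lemma Kg_Jg p : supported_on B p -> Kg p -> Jg p.
Proof.
move=> sp [s [Hs ps]]; exists [seq (proj B x.1, proj B x.2) | x <- s]; split.
  move=> x /mapP [z zs ->] /=; split; first exact: proj_supp.
  case: (Hs z zs) => _ [[perp|eu]|lf].
  - by left; rewrite proj_id //; case: perp.
  - by right; rewrite -eu proj_id //; case: lu.
  left; rewrite proj_kill; first by split; [apply: supp0 | apply: apolar0].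
  case: lf => hz sz m nz.
  have z0 : z.2@_0 = 0 by apply: (homog_coef0 hz).
  by have [i Bi mi] := supp_noconst sz z0 nz; exists i; rewrite // -HBB.
by rewrite -(proj_id sp) ps proj_sum big_map; apply: eq_bigr => x _; rewrite projM.
Qed.

End Main.

Unset Implicit Arguments. Set Strict Implicit. Set Printing Implicit Defensive.

Lemma nth_mkiota (V : zmodType) (f : nat -> V) a k : (k < a)%N ->
  [seq f i | i <- iota 0 a]`_k = f k.
Proof. by move=> ka; rewrite (nth_map 0%N) ?size_iota // nth_iota. Qed.


Section Final.
Variables (K : numFieldType) (n1 n2 d : nat) (F1 F2 l1 l2 : {mpoly K[n1 + n2]}).
Local Notation P := {mpoly K[n1 + n2]}.
Local Notation B1 := (blk1 n1 n2).
Local Notation B2 := (blk2 n1 n2).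
Hypothesis hd : (2 <= d)%N.
Hypothesis hF1 : F1 \is d.-homog.
Hypothesis sF1 : supported_on B1 F1.
Hypothesis hF2 : F2 \is d.-homog.
Hypothesis sF2 : supported_on B2 F2.
Hypothesis l1f : lin_forms_on B1 l1.
Hypothesis l2f : lin_forms_on B2 l2.
Hypothesis nu1 : apolar l1 F1 != 0.
Hypothesis nu2 : apolar l2 F2 != 0.

Lemma HB12 i : B2 i = ~~ B1 i.
Proof. by rewrite /blk1 /blk2 -leqNgt. Qed.
Lemma HB21 i : B1 i = ~~ B2 i.
Proof. by rewrite /blk1 /blk2 -ltnNge. Qed.

Local Notation J := (ideal_in (fun _ : P => True)
   (ideal_add (perp_in (fun _ : P => True) (F1 + F2)) (eq (l1 + l2)))).
Local Notation K1 := (ideal_in (fun _ : P => True)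
  (ideal_add (ideal_add (perp_in (fun p => supported_on B1 p) F1) (eq l1)) (lin_forms_on B2))).
Local Notation K2 := (ideal_in (fun _ : P => True)
  (ideal_add (ideal_add (perp_in (fun p => supported_on B2 p) F2) (eq l2)) (lin_forms_on B1))).

Lemma J_K1 p : J p -> K1 p.
Proof.
move=> [s [Hs ->]]; apply: idl_sum => x xs; apply: idlM => //.
case: (Hs x xs) => _ [[_ pe]|e].
  exact: (Kg_perp HB12 hd hF1 sF1 hF2 sF2 l1f nu1).
by rewrite -e; exact: (Kg_uu _ _ _ l2f).
Qed.

Lemma J_K2 p : J p -> K2 p.
Proof.
move=> [s [Hs ->]]; apply: idl_sum => x xs; apply: idlM => //.
case: (Hs x xs) => _ [[_ pe]|e].
  by apply: (Kg_perp HB21 hd hF2 sF2 hF1 sF1 l2f nu2); rewrite addrC.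
by rewrite -e addrC; exact: (Kg_uu _ _ _ l1f).
Qed.

Lemma noconst_kill (B B' : pred 'I_(n1+n2)) (HBB : forall i, B' i = ~~ B i) (l G : P) :
  lin_forms_on B l -> supported_on B' G -> apolar l G = 0.
Proof.
move=> [hl sl] sG; apply: (apolar_kill (B := B')) => // m; rewrite mcoeff_msupp => nz.
have l0 : l@_0 = 0 by apply: (homog_coef0 hl).
by have [i Bi mi] := supp_noconst sl l0 nz; exists i; rewrite // HBB negbK.
Qed.


Lemma l1_notin_J : ~ J l1.
Proof.
have [h1 [c1 [sh1 h1F2 hc1 nc1]]] := exists_h HB12 hd hF1 sF1 hF2 sF2 l1f nu1.
have [h2 [c2 [sh2 h2F1 hc2 nc2]]] := exists_h HB21 hd hF2 sF2 hF1 sF1 l2f nu2.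
have z1 : apolar l1 F2 = 0 := (noconst_kill _ _ HB12 _ _ l1f sF2).
have z2 : apolar l2 F1 = 0 := (noconst_kill _ _ HB21 _ _ l2f sF1).
have a12 : apolar (l1*h2) F1 = 0 by rewrite apolarM h2F1 apolarG0.
have a12' : apolar (l1*h2) F2 = 0 by rewrite mulrC apolarM z1 apolarG0.
have a11' : apolar (l1*h1) F2 = 0 by rewrite mulrC apolarM z1 apolarG0.
have a21 : apolar (l2*h1) F1 = 0 by rewrite mulrC apolarM z2 apolarG0.
have a21' : apolar (l2*h1) F2 = 0 by rewrite apolarM h1F2 apolarG0.
have a22 : apolar (l2*h2) F1 = 0 by rewrite mulrC apolarM z2 apolarG0.
set beta := - c1 / c2.
set h := h1 + beta *: h2.
have E1 : apolar (l1 * h) (F1 + F2) = c1%:MP.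
  rewrite mulrDr -scalerAr apolarD apolarZ !apolarGD hc1 a11' a12 a12'.
  by rewrite addr0 add0r scaler0 addr0.
have E2 : apolar ((l1 + l2) * h) (F1 + F2) = 0.
  rewrite mulrDl apolarD E1 mulrDr -scalerAr apolarD apolarZ !apolarGD hc2.
  rewrite a21 a21' a22 !add0r.
  rewrite -mul_mpolyC -rmorphM -rmorphD /beta.
  rewrite divfK // subrr.
  by rewrite rmorph0.
move=> [s [Hs ls]].
have : (apolar (l1 * h) (F1 + F2))@_0 = 0.
  rewrite ls mulr_suml apolar_sum raddf_sum /= big_seq big1 // => x xs.
  case: (Hs x xs) => _ [[_ pe]|e].
    by rewrite mulrAC apolarM pe apolarG0 mcoeff0.
  by rewrite -e -mulrA apolarM E2 apolarG0 mcoeff0.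
by rewrite E1 mcoeffC eqxx mulr1 => /eqP; rewrite (negbTE nc1).
Qed.


Local Notation J1 := (ideal_in (fun p : P => supported_on B1 p)
  (ideal_add (perp_in (fun p : P => supported_on B1 p) F1) (eq l1))).
Local Notation J2 := (ideal_in (fun p : P => supported_on B2 p)
  (ideal_add (perp_in (fun p : P => supported_on B2 p) F2) (eq l2))).

Lemma K1_J1 p : supported_on B1 p -> K1 p -> J1 p.
Proof. exact: (Kg_Jg HB12 l1f). Qed.
Lemma K2_J2 p : supported_on B2 p -> K2 p -> J2 p.
Proof. exact: (Kg_Jg HB21 l2f). Qed.
Lemma K1_nc q : supported_on B2 q -> q@_0 = 0 -> K1 q.
Proof. exact: Kg_noconst. Qed.
Lemma K2_nc q : supported_on B1 q -> q@_0 = 0 -> K2 q.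
Proof. exact: Kg_noconst. Qed.
Lemma K1_l1 : K1 l1.
Proof. exact: Kg_u. Qed.
Lemma K2_l1 : K2 l1.
Proof. by apply: idlG => //; right. Qed.


Lemma split_comb (a1 a2 : nat) (c : seq K) (s1 s2 : seq P) :
  size s1 = a1 ->
  \sum_(j < a1 + a2) c`_j *: (s1 ++ s2)`_j =
  \sum_(j < a1) (take a1 c)`_j *: s1`_j + \sum_(k < a2) (drop a1 c)`_k *: s2`_k.
Proof.
move=> sz1; rewrite big_split_ord /=; congr (_ + _); apply: eq_bigr => j _ /=.
  by rewrite nth_cat sz1 ltn_ord nth_take.
by rewrite nth_cat sz1 ltnNge leq_addr /= addKn nth_drop.
Qed.

Lemma comb_supp (B : pred 'I_(n1+n2)) a (c : seq K) (s : seq P) :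
  size s = a -> (forall x, x \in s -> supported_on B x) ->
  supported_on B (\sum_(j < a) c`_j *: s`_j).
Proof.
move=> sz H; apply: supp_sum => j; apply: suppZ; apply: H; apply: mem_nth.
by rewrite sz ltn_ord.
Qed.

Lemma codim_part a1 a2 :
  codim_ge (fun p : P => supported_on B1 p) (fun p => J1 p) a1 ->
  codim_ge (fun p : P => supported_on B2 p) (fun p => J2 p) a2 ->
  codim_ge (fun _ : P => True) (fun p => J p) (a1 + a2).
Proof.
move=> [s1 [sz1 [in1 ind1]]] [s2 [sz2 [in2 ind2]]].
have sQ1 c : supported_on B1 (\sum_(j < a1) c`_j *: s1`_j) by apply: comb_supp.
have sQ2 c : supported_on B2 (\sum_(j < a2) c`_j *: s2`_j) by apply: comb_supp.
have Q1z (c : seq K) : size c = (a1 + a2)%N -> K1 (\sum_(j < a1) (take a1 c)`_j *: s1`_j) ->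
    (forall j, (take a1 c)`_j = 0) /\ \sum_(j < a1) (take a1 c)`_j *: s1`_j = 0.
  move=> szc HK; have z : forall j, (take a1 c)`_j = 0.
    by apply: ind1; [rewrite size_takel // szc leq_addr | apply: K1_J1].
  by split => //; apply: big1 => j _; rewrite z scale0r.
set e := fun k => (s2`_k)@_0.
case: (pickP (fun k : 'I_a2 => e k != 0)) => [k0 ek0 | none].
  set r := fun k => e k / e k0.
  set s2' := [seq (if i == (k0 : nat) then l1 else s2`_i - r i *: s2`_k0) | i <- iota 0 a2].
  have s2'E (k : 'I_a2) : s2'`_k = if k == k0 then l1 else s2`_k - r k *: s2`_k0.
    by rewrite nth_mkiota.
  exists (s1 ++ s2'); split; first by rewrite size_cat sz1 size_map size_iota.
  split => // c szc; rewrite (split_comb a1 a2 c s1 s2' sz1) => Jc.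
  set c2 := drop a1 c.
  set Q := \sum_(k < a2 | k != k0) c2`_k *: (s2`_k - r k *: s2`_k0).
  have E2 : \sum_(k < a2) c2`_k *: s2'`_k = c2`_k0 *: l1 + Q.
    rewrite (bigD1 k0) //= s2'E eqxx; congr (_ + _); apply: eq_bigr => k nk.
    by rewrite s2'E (negbTE nk).
  rewrite E2 in Jc.
  have sQ : supported_on B2 Q.
    rewrite /Q big_mkcond /=; apply: supp_sum => k; case: ifP => _; last exact: supp0.
    apply: suppZ; apply: suppD; last apply: suppN; try apply: suppZ; apply: in2;
      apply: mem_nth; by rewrite sz2 ltn_ord.
  have Q0 : Q@_0 = 0.
    rewrite /Q raddf_sum /= big1 // => k _; rewrite mcoeffZ mcoeffB mcoeffZ.
    by rewrite /r -/(e k) -/(e k0) divfK // subrr mulr0.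
  set Q1 := \sum_(j < a1) _ in Jc.
  have [z1 Q1E] : (forall j, (take a1 c)`_j = 0) /\ Q1 = 0.
    apply: Q1z => //; have := J_K1 _ Jc => HK.
    rewrite -/Q1; have -> : Q1 = (Q1 + (c2`_k0 *: l1 + Q)) - (c2`_k0 *: l1 + Q) by rewrite addrK.
    apply: idlB => //; apply: idlD; first by apply: idlZ => //; apply: K1_l1.
    exact: K1_nc.
  rewrite Q1E add0r in Jc.
  set dv := [seq (if i == (k0 : nat) then - \sum_(k < a2 | k != k0) c2`_k * r k
                  else c2`_i) | i <- iota 0 a2].
  have dvE (k : 'I_a2) : dv`_k = if k == k0 then - \sum_(k < a2 | k != k0) c2`_k * r k
                  else c2`_k by rewrite nth_mkiota.
  have QE : Q = \sum_(k < a2) dv`_k *: s2`_k.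
    rewrite (bigD1 k0) //= dvE eqxx /Q.
    rewrite (eq_bigr (fun k : 'I_a2 => c2`_k *: s2`_k - (c2`_k * r k) *: s2`_k0)); last first.
      by move=> k _; rewrite scalerBr scalerA.
    rewrite sumrB -scaler_suml scaleNr addrC; congr (_ - _).
    by apply: eq_bigr => k nk; rewrite dvE (negbTE nk).
  have zd : forall k, dv`_k = 0.
    apply: ind2; first by rewrite size_map size_iota.
    apply: K2_J2; first by rewrite -QE.
    rewrite -QE; have := J_K2 _ Jc => HK.
    have -> : Q = (c2`_k0 *: l1 + Q) - c2`_k0 *: l1 by rewrite (addrC (c2`_k0 *: l1)) addrK.
    by apply: idlB => //; apply: idlZ => //; apply: K2_l1.
  have zc (k : 'I_a2) : k != k0 -> c2`_k = 0.
    by move=> nk; have := zd k; rewrite dvE (negbTE nk).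
  have Qz : Q = 0 by apply: big1 => k nk; rewrite zc // scale0r.
  rewrite Qz addr0 in Jc.
  have ck0 : c2`_k0 = 0.
    apply/eqP/negP => /negP nz; apply: l1_notin_J.
    have H := idlZ (c2`_k0)^-1 (fun _ => I) Jc.
    by rewrite scalerA mulVf // scale1r in H.
  move=> j; case: (ltnP j a1) => hj; first by rewrite -(nth_take 0 hj) z1.
  rewrite -(subnKC hj) -nth_drop -/c2.
  case: (ltnP (j - a1) a2) => hk; last by rewrite nth_default // size_drop szc addKn.
  have -> : (j - a1)%N = Ordinal hk by [].
  by case: (eqVneq (Ordinal hk) k0) => [->|nk]; [apply: ck0 | apply: zc].
exists (s1 ++ s2); split; first by rewrite size_cat sz1 sz2.
split => // c szc; rewrite (split_comb a1 a2 c s1 s2 sz1) => Jc.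
set Q2 := \sum_(k < a2) _ in Jc.
have Q20 : Q2@_0 = 0.
  rewrite /Q2 raddf_sum /= big1 // => k _; rewrite mcoeffZ.
  by move: (none k) => /= /negbFE /eqP; rewrite /e => ->; rewrite mulr0.
have [z1 Q1E] : (forall j, (take a1 c)`_j = 0) /\ \sum_(j < a1) (take a1 c)`_j *: s1`_j = 0.
  apply: Q1z => //; have := J_K1 _ Jc => HK.
  have -> : \sum_(j < a1) (take a1 c)`_j *: s1`_j =
    (\sum_(j < a1) (take a1 c)`_j *: s1`_j + Q2) - Q2 by rewrite addrK.
  apply: idlB => //; apply: K1_nc => //; exact: sQ2.
rewrite Q1E add0r in Jc.
have z2 : forall k, (drop a1 c)`_k = 0.
  apply: ind2; first by rewrite size_drop szc addKn.
  by apply: K2_J2; [apply: sQ2 | apply: J_K2].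
move=> j; case: (ltnP j a1) => hj; first by rewrite -(nth_take 0 hj) z1.
by rewrite -(subnKC hj) -nth_drop z2.
Qed.

End Final.


Theorem mainTheorem3 (R : realType) (n1 n2 d : nat)
  (F1 F2 l1 l2 : {mpoly (complex R)[n1 + n2]}) :
  let T : {mpoly (complex R)[n1 + n2]} -> Prop := fun _ => True in
  let T1 := fun p => supported_on (blk1 n1 n2) p in
  let T2 := fun p => supported_on (blk2 n1 n2) p in
  let F := F1 + F2 in
  (2 <= d)%N ->
  F1 \is d.-homog -> supported_on (blk1 n1 n2) F1 ->
  F2 \is d.-homog -> supported_on (blk2 n1 n2) F2 ->
  lin_forms_on (blk1 n1 n2) l1 -> lin_forms_on (blk2 n1 n2) l2 ->
  ~ perp_in T1 F1 l1 -> ~ perp_in T2 F2 l2 ->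
  let J := ideal_in T (ideal_add (perp_in T F) (eq (l1 + l2))) in
  let K1 := ideal_in T (ideal_add (ideal_add (perp_in T1 F1) (eq l1))
                                  (lin_forms_on (blk2 n1 n2))) in
  let K2 := ideal_in T (ideal_add (ideal_add (perp_in T2 F2) (eq l2))
                                  (lin_forms_on (blk1 n1 n2))) in
  let J1 := ideal_in T1 (ideal_add (perp_in T1 F1) (eq l1)) in
  let J2 := ideal_in T2 (ideal_add (perp_in T2 F2) (eq l2)) in
  ((forall p, J p -> K1 p /\ K2 p) /\ exists p, K1 p /\ K2 p /\ ~ J p) /\
  (forall a1 a2, codim_ge T1 J1 a1 -> codim_ge T2 J2 a2 ->
     codim_ge T J (a1 + a2)).
Proof.
move=> T T1 T2 F hd hF1 sF1 hF2 sF2 l1f l2f np1 np2 J K1 K2 J1 J2.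
have nu1 : apolar l1 F1 != 0 by apply/eqP => E; apply: np1; split => //; case: l1f.
have nu2 : apolar l2 F2 != 0 by apply/eqP => E; apply: np2; split => //; case: l2f.
subst T T1 T2 F J K1 K2 J1 J2.
split; first split.
- move=> p Jp; split.
    exact: (J_K1 _ _ _ _ _ _ _ _ hd hF1 sF1 hF2 sF2 l1f l2f nu1 _ Jp).
  exact: (J_K2 _ _ _ _ _ _ _ _ hd hF1 sF1 hF2 sF2 l1f l2f nu2 _ Jp).
- exists l1; split; first exact: K1_l1.
  split; first exact: K2_l1.
  exact: (l1_notin_J _ _ _ _ _ _ _ _ hd hF1 sF1 hF2 sF2 l1f l2f nu1 nu2).
move=> a1 a2 H1 H2.
exact: (codim_part _ _ _ _ _ _ _ _ hd hF1 sF1 hF2 sF2 l1f l2f nu1 nu2).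
Qed.
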